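(* Let $\mathbf{k}$ be a field and let $\mathfrak{B}=\mathbf{k}\langle g,x\rangle$ be the free algebra on $g,x$, made into a bialgebra by $\Delta(g)=g\otimes g$, $\Delta(x)=x\otimes 1+g\otimes x$, $\varepsilon(g)=1$, $\varepsilon(x)=0$. For integers $k,l\ge 0$ let $C_{k,l}$ be the sum of all monomials in $g,x$ containing exactly $k$ letters $g$ and $l$ letters $x$ (so $C_{0,0}=1$), and set $C_{k,l}=0$ if $k<0$ or $l<0$. Then: (1) $C_{k,l}=g\,C_{k-1,l}+x\,C_{k,l-1}=C_{k-1,l}\,g+C_{k,l-1}\,x$; (2) $\Delta(x^n)=\sum_{k\ge0}C_{k,n-k}\otimes x^k$ for all $n\ge0$; (3) $\Delta(C_{p,q})=\sum_{k\ge0}C_{p+k,q-k}\otimes C_{p,k}$. *)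

(* Defs.v *)
From mathcomp Require Import all_boot all_order all_algebra.
Set Implicit Arguments. Unset Strict Implicit. Unset Printing Implicit Defensive.
Import GRing.Theory.
Local Open Scope ring_scope.

(* Words in the letters g (encoded [true]) and x (encoded [false]). *)
Definition word := seq bool.

Section FreeAlg.
Variable K : fieldType.

Definition B := word -> K.
Definition BB := word -> word -> K.

Definition zeroB : B := fun _ => 0.
Definition addB (f h : B) : B := fun w => f w + h w.
Definition mon (w : word) : B := fun u => (u == w)%:R.
Definition oneB : B := mon [::].
Definition gB : B := mon [:: true].
Definition xB : B := mon [:: false].
Definition mulB (f h : B) : B :=
  fun w => \sum_(i < (size w).+1) f (take i w) * h (drop i w).
Fixpoint powB (f : B) (n : nat) : B :=
  if n is m.+1 then mulB f (powB f m) else oneB.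

Definition addT (F H : BB) : BB := fun u v => F u v + H u v.
Definition oneT : BB := fun u v => ((u == [::]) && (v == [::]))%:R.
Definition mulT (F H : BB) : BB :=
  fun u v => \sum_(i < (size u).+1) \sum_(j < (size v).+1)
               F (take i u) (take j v) * H (drop i u) (drop j v).
Definition tens (f h : B) : BB := fun u v => f u * h v.

Definition deltaLetter (b : bool) : BB :=
  if b then tens gB gB else addT (tens xB oneB) (tens gB xB).
Definition deltaWord (w : word) : BB :=
  foldr (fun b acc => mulT (deltaLetter b) acc) oneT w.
(* linear extension: the coefficient of u⊗v in Delta(w) vanishes unless
   size w = size u, so only words of length size u contribute. *)
Definition Delta (f : B) : BB :=
  fun u v => \sum_(w : (size u).-tuple bool) f w * deltaWord w u v.

Definition C (k l : int) : B :=
  match k, l with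
  | Posz a, Posz b =>
      fun u => \sum_(t : (a + b).-tuple bool | count id t == a) mon t u
  | _, _ => zeroB
  end.

End FreeAlg.

(* Main.v *)
Require Import Defs.
From mathcomp Require Import all_boot all_order all_algebra zify.
From Stdlib Require Import FunctionalExtensionality.
Import GRing.Theory.
Local Open Scope ring_scope.

Lemma sum_tuple0 (K : fieldType) (F : word -> K) :
  \sum_(w : 0.-tuple bool) F w = F [::].
Proof. by rewrite (big_pred1 [tuple]) // => t; rewrite [t]tuple0; symmetry; exact: eqxx. Qed.

Lemma sum_tupleS (K : fieldType) n (F : word -> K) :
  \sum_(w : n.+1.-tuple bool) F w =
  \sum_(w : n.-tuple bool) F (true :: w) + \sum_(w : n.-tuple bool) F (false :: w).
Proof.
rewrite (reindex (fun p : bool * n.-tuple bool => [tuple of p.1 :: p.2])) /=.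
  rewrite -(pair_big xpredT xpredT (fun b (w : n.-tuple bool) => F (b :: w))) /=.
  by rewrite big_bool.
exists (fun w : n.+1.-tuple bool => (thead w, [tuple of behead w])).
  move=> [b w] _ /=; rewrite theadE; congr pair; exact: val_inj.
move=> w _ /=; by rewrite -tuple_eta.
Qed.

Lemma sum_take_nil (K : fieldType) (F : word -> K) v :
  \sum_(j < (size v).+1) mon K [::] (take j v) * F (drop j v) = F v.
Proof.
rewrite big_ord_recl /= /mon take0 drop0 eqxx mul1r big1 ?addr0 // => j _.
case: v j => [|a v] j /=; first by case: j.
by rewrite mul0r.
Qed.

Lemma sum_take_1 (K : fieldType) (F : word -> K) a u :
  \sum_(i < (size u).+1) mon K [:: a] (take i u) * F (drop i u) =
  if u is a' :: u' then (a' == a)%:R * F u' else 0.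
Proof.
case: u => [|a' u] /=.
  by rewrite big_ord1 /mon /= mul0r.
rewrite big_ord_recl big_ord_recl /mon /= mul0r add0r take0 drop0.
rewrite big1 ?addr0; first by congr (_ * _); rewrite /eq_op /= andbT.
move=> i _; rewrite /bump /= !add1n /=.
case: u i => [|b u] i /=; first by case: i.
by rewrite eqseq_cons andbF mul0r.
Qed.

Lemma sum_drop_1 (K : fieldType) (F : word -> K) a b u :
  \sum_(i < (size (rcons u a)).+1) F (take i (rcons u a)) * mon K [:: b] (drop i (rcons u a)) = (a == b)%:R * F u.
Proof.
rewrite -cats1 size_cat /= addn1 big_ord_recr big_ord_recr /= /mon.
rewrite [drop (size u).+1 _]drop_oversize; last by rewrite size_cat /= addn1.
rewrite take_size_cat // drop_size_cat // mulr0 addr0 mulrC eqseq_cons andbT.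
rewrite big1 ?add0r // => i _ /=.
have -> : (drop i (u ++ [:: a]) == [:: b]) = false.
  apply/negbTE/eqP => /(congr1 size); rewrite size_drop size_cat /=.
  have := ltn_ord i; lia.
by rewrite mulr0.
Qed.

Lemma mulT_tens (K : fieldType) (f h : B K) (H : BB K) u v :
  mulT (tens f h) H u v = \sum_(i < (size u).+1) f (take i u) *
     \sum_(j < (size v).+1) h (take j v) * H (drop i u) (drop j v).
Proof.
rewrite /mulT /tens; apply: eq_bigr => i _; rewrite mulr_sumr.
by apply: eq_bigr => j _; rewrite mulrA.
Qed.

Lemma mulT_addl (K : fieldType) (F G H : BB K) u v :
  mulT (addT F G) H u v = mulT F H u v + mulT G H u v.
Proof.
rewrite /mulT -big_split; apply: eq_bigr => i _; rewrite -big_split.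
by apply: eq_bigr => j _; rewrite /addT mulrDl.
Qed.

Lemma dW_true (K : fieldType) w u v : deltaWord K (true :: w) u v =
  if u is a :: u' then (if v is c :: v' then (a == true)%:R * ((c == true)%:R * deltaWord K w u' v') else 0) else 0.
Proof.
rewrite /= -/(deltaWord K w) mulT_tens /gB.
under eq_bigr => i _ do rewrite (sum_take_1 _ (fun s => deltaWord K w (drop i u) s)).
case: v => [|c v].
  by rewrite big1; [case: u | move=> i _; rewrite mulr0].
by rewrite (sum_take_1 _ (fun s => (c == true)%:R * deltaWord K w s v)).
Qed.

Lemma dW_false (K : fieldType) w u v : deltaWord K (false :: w) u v =
  (if u is a :: u' then (a == false)%:R * deltaWord K w u' v else 0) +
  (if u is a :: u' then (if v is c :: v' then (a == true)%:R * ((c == false)%:R * deltaWord K w u' v') else 0) else 0).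
Proof.
rewrite /= -/(deltaWord K w) mulT_addl !mulT_tens /gB /xB /oneB.
congr (_ + _).
  under eq_bigr => i _ do rewrite (sum_take_nil _ (fun s => deltaWord K w (drop i u) s)).
  by rewrite (sum_take_1 _ (fun s => deltaWord K w s v)).
under eq_bigr => i _ do rewrite (sum_take_1 _ (fun s => deltaWord K w (drop i u) s)).
case: v => [|c v].
  by rewrite big1; [case: u | move=> i _; rewrite mulr0].
by rewrite (sum_take_1 _ (fun s => (c == false)%:R * deltaWord K w s v)).
Qed.

Definition tl (K : fieldType) (b : bool) (f : B K) : B K := fun w => f (b :: w).
Arguments tl {K} b f _.

Lemma Delta_ext (K : fieldType) (f h : B K) : f =1 h -> forall u v, Delta f u v = Delta h u v.
Proof. by move=> E u v; apply: eq_bigr => w _; rewrite E. Qed.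

Lemma Delta_zero (K : fieldType) u v : Delta (zeroB K) u v = 0.
Proof. by apply: big1 => w _; rewrite /zeroB mul0r. Qed.

Lemma Delta_nil (K : fieldType) (f : B K) v : Delta f [::] v = f [::] * (v == [::])%:R.
Proof. by rewrite /Delta /= (sum_tuple0 _ (fun w => f w * deltaWord K w [::] v)). Qed.

Lemma Delta_cons (K : fieldType) (f : B K) a u v : Delta f (a :: u) v =
  \sum_(w : (size u).-tuple bool) f (true :: w) * deltaWord K (true :: w) (a :: u) v +
  \sum_(w : (size u).-tuple bool) f (false :: w) * deltaWord K (false :: w) (a :: u) v.
Proof. exact: (sum_tupleS K (size u) (fun w => f w * deltaWord K w (a :: u) v)). Qed.

Lemma Delta_x (K : fieldType) (f : B K) u v : Delta f (false :: u) v = Delta (tl false f) u v.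
Proof.
rewrite Delta_cons.
rewrite big1 ?add0r; last by move=> w _; rewrite dW_true /=; case: v => [|c v'] /=; rewrite ?mul0r ?mulr0.
rewrite /Delta; apply: eq_bigr => w _; rewrite dW_false /=; case: v => [|c v'] /=; by rewrite ?mul1r ?mul0r ?addr0 /tl.
Qed.

Lemma Delta_gnil (K : fieldType) (f : B K) u : Delta f (true :: u) [::] = 0.
Proof.
rewrite Delta_cons.
rewrite !big1 ?addr0 // => w _; rewrite ?dW_true ?dW_false /= ?mul0r ?add0r ?mulr0 //.
Qed.

Lemma Delta_gg (K : fieldType) (f : B K) u v : Delta f (true :: u) (true :: v) = Delta (tl true f) u v.
Proof.
rewrite Delta_cons [X in _ + X]big1 ?addr0; last first.
  by move=> w _; rewrite dW_false /= !(mul0r, mul1r, addr0, add0r, mulr0).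
by rewrite /Delta; apply: eq_bigr => w _; rewrite dW_true /= !(mul0r, mul1r, addr0, add0r, mulr0).
Qed.

Lemma Delta_gx (K : fieldType) (f : B K) u v : Delta f (true :: u) (false :: v) = Delta (tl false f) u v.
Proof.
rewrite Delta_cons big1 ?add0r; last first.
  by move=> w _; rewrite dW_true /= !(mul0r, mul1r, addr0, add0r, mulr0).
by rewrite /Delta; apply: eq_bigr => w _; rewrite dW_false /= !(mul0r, mul1r, addr0, add0r, mulr0).
Qed.

Definition cc (K : fieldType) (p q : nat) : B K :=
  fun w => ((size w == (p + q)%N) && (count id w == p))%:R.

Lemma cE (K : fieldType) (p q : nat) : C K p q =1 cc K p q.
Proof.
move=> w /=; rewrite /cc.
case: (eqVneq (size w) (p + q)%N) => Hs /=; last first.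
  apply: big1 => t _; rewrite /mon.
  have -> : (w == t) = false.
    apply/negbTE; apply: contra_neq Hs => ->; exact: size_tuple.
  by [].
have Hw : size w == (p + q)%N by apply/eqP.
pose tw : (p + q).-tuple bool := Tuple Hw.
case Hc: (count id w == p).
  rewrite (bigD1 tw) /=; last by rewrite Hc.
  rewrite /mon eqxx big1 ?addr0 // => t /andP[_ Ht].
  have -> : (w == t) = false.
    apply/negbTE; apply: contra Ht => /eqP E; apply/eqP/val_inj => /=; by rewrite E.
  by [].
apply: big1 => t /eqP Ht; rewrite /mon.
have -> : (w == t) = false.
  apply/negbTE/negP => /eqP E; by rewrite E Ht eqxx in Hc.
by [].
Qed.

Lemma c_nil (K : fieldType) p q : cc K p q [::] = ((p == 0%N) && (q == 0%N))%:R.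
Proof. by rewrite /cc; case: p => [|p]; case: q. Qed.

Lemma c_true (K : fieldType) p q w : cc K p q (true :: w) = if p is p'.+1 then cc K p' q w else 0.
Proof.
rewrite /cc; case: p => [|p] /=; first by rewrite add1n andbF.
by rewrite add1n addSn !eqSS.
Qed.

Lemma c_false (K : fieldType) p q w : cc K p q (false :: w) = if q is q'.+1 then cc K p q' w else 0.
Proof.
rewrite /cc; case: q => [|q] /=; last by rewrite addnS eqSS add0n.
have -> : (((size w).+1 == (p + 0)%N) && ((false + count id w)%N == p)) = false; last by [].
apply/negbTE/negP => /andP[/eqP H1 /eqP H2]; have := count_size id w; move: H2 => /=; lia.
Qed.

Lemma c_rcons (K : fieldType) p q w b : cc K p q (rcons w b) = cc K p q (b :: w).
Proof. by rewrite /cc size_rcons -cats1 count_cat /= addn0 [(count id w + _)%N]addnC. Qed.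

Lemma tl_true (K : fieldType) p q :
  tl true (cc K p q) =1 if p is p'.+1 then cc K p' q else zeroB K.
Proof. by move=> w; rewrite /tl c_true; case: p. Qed.

Lemma tl_false (K : fieldType) p q :
  tl false (cc K p q) =1 if q is q'.+1 then cc K p q' else zeroB K.
Proof. by move=> w; rewrite /tl c_false; case: q. Qed.

Lemma main3 (K : fieldType) u : forall p q v,
  Delta (cc K p q) u v = \sum_(k < q.+1) cc K (p + k) (q - k) u * cc K p k v.
Proof.
elim: u => [|a u IH] p q v.
  rewrite Delta_nil big_ord_recl big1 ?addr0; last first.
    by move=> k _; rewrite c_nil /= addnS mul0r.
  rewrite addn0 subn0 !c_nil; case: p => [|p] /=; last by rewrite !mul0r.
  by case: v.
case: a.
  case: v => [|[] v].
  - rewrite Delta_gnil; apply/esym/big1 => k _; rewrite c_true c_nil.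
    case: p => [|p]; case: (nat_of_ord k) => [|k'] //=; by rewrite ?mulr0 ?mul0r.
  - rewrite Delta_gg (@Delta_ext K _ _ (tl_true K p q)).
    case: p => [|p].
      rewrite Delta_zero; apply/esym/big1 => k _; by rewrite (c_true _ 0) mulr0.
    rewrite IH; apply: eq_bigr => k _; by rewrite !c_true addSn.
  - rewrite Delta_gx (@Delta_ext K _ _ (tl_false K p q)) big_ord_recl c_false mulr0 add0r.
    case: q => [|q].
      by rewrite Delta_zero big_ord0.
    rewrite IH; apply: eq_bigr => k _ /=; by rewrite c_true c_false addnS subSS.
rewrite Delta_x (@Delta_ext K _ _ (tl_false K p q)) big_ord_recr /= subnn c_false mul0r addr0.
case: q => [|q].
  by rewrite Delta_zero big_ord0.
rewrite IH; apply: eq_bigr => k _ /=; by rewrite subSn ?c_false // -ltnS.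
Qed.

Lemma mulB_l (K : fieldType) b (F : B K) w :
  mulB (mon K [:: b]) F w = if w is a :: w' then (a == b)%:R * F w' else 0.
Proof. exact: (sum_take_1 K F b w). Qed.

Lemma mulB_r (K : fieldType) b (F : B K) w a :
  mulB F (mon K [:: b]) (rcons w a) = (a == b)%:R * F w.
Proof. exact: (sum_drop_1 K F a b w). Qed.

Lemma mulB_r0 (K : fieldType) b (F : B K) :
  mulB F (mon K [:: b]) [::] = 0.
Proof. by rewrite /mulB /= big_ord1 /mon /= mulr0. Qed.

Lemma powx (K : fieldType) n : powB (xB K) n =1 cc K 0 n.
Proof.
elim: n => [|n IH] w.
  by case: w => [|b w].
rewrite /= /xB mulB_l; case: w => [|[] w]; rewrite ?c_nil ?c_true ?c_false ?mul0r //.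
by rewrite mul1r IH.
Qed.

Lemma Cpred1 (K : fieldType) (k l : nat) :
  C K (k%:Z - 1) l =1 if k is k'.+1 then cc K k' l else zeroB K.
Proof.
case: k => [|k] w; first by [].
have -> : (k.+1%:Z - 1) = k%:Z by lia.
exact: cE.
Qed.

Lemma Cpred2 (K : fieldType) (k l : nat) :
  C K k (l%:Z - 1) =1 if l is l'.+1 then cc K k l' else zeroB K.
Proof.
case: l => [|l] w; first by case: k.
have -> : (l.+1%:Z - 1) = l%:Z by lia.
exact: cE.
Qed.

Lemma part1_cons (K : fieldType) k l a w :
  cc K k l (a :: w) = (a == true)%:R * (if k is k'.+1 then cc K k' l else zeroB K) w
                    + (a == false)%:R * (if l is l'.+1 then cc K k l' else zeroB K) w.
Proof.
case: a; rewrite ?c_true ?c_false /= ?mul1r ?mul0r ?addr0 ?add0r; by [case: k | case: l].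
Qed.

Lemma part1 (K : fieldType) (k l : nat) : (0 < k + l)%N ->
     C K k l = addB (mulB (gB K) (C K (k%:Z - 1) l)) (mulB (xB K) (C K k (l%:Z - 1)))
     /\ C K k l = addB (mulB (C K (k%:Z - 1) l) (gB K)) (mulB (C K k (l%:Z - 1)) (xB K)).
Proof.
move=> Hkl; split; apply: functional_extensionality => w; rewrite cE /addB.
  rewrite /gB /xB !mulB_l; case: w => [|a w].
    by rewrite c_nil addr0; case: k Hkl => [|k]; case: l.
  by rewrite part1_cons Cpred1 Cpred2.
rewrite /gB /xB; case/lastP: w => [|w a].
  by rewrite !mulB_r0 c_nil addr0; case: k Hkl => [|k]; case: l.
by rewrite !mulB_r c_rcons part1_cons Cpred1 Cpred2.
Qed.

Theorem lemma2p10 (K : fieldType) :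
  (forall k l : nat, (0 < k + l)%N ->
     C K k l = addB (mulB (gB K) (C K (k%:Z - 1) l)) (mulB (xB K) (C K k (l%:Z - 1)))
     /\ C K k l = addB (mulB (C K (k%:Z - 1) l) (gB K)) (mulB (C K k (l%:Z - 1)) (xB K)))
  /\ (forall n : nat,
     Delta (powB (xB K) n)
       = (fun u v => \sum_(k < n.+1) tens (C K k (n%:Z - k%:Z)) (powB (xB K) k) u v))
  /\ (forall p q : nat,
     Delta (C K p q)
       = (fun u v => \sum_(k < q.+1) tens (C K (p + k)%N (q%:Z - k%:Z)) (C K p k) u v)).
Proof.
split; first exact: part1.
split.
  move=> n; apply: functional_extensionality => u; apply: functional_extensionality => v.
  rewrite (@Delta_ext K _ _ (powx K n)) main3; apply: eq_bigr => k _.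
  rewrite /tens subzn; last by rewrite -ltnS.
  by rewrite cE powx add0n.
move=> p q; apply: functional_extensionality => u; apply: functional_extensionality => v.
rewrite (@Delta_ext K _ _ (cE K p q)) main3; apply: eq_bigr => k _.
rewrite /tens subzn; last by rewrite -ltnS.
by rewrite !cE.
Qed.
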